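(* Fix speeds $v_1,v_2,v_3>0$ and turning-rate magnitudes $w_1,w_3>0$. Let LSL denote the CSC path with inputs $\mathbf{u}_1=(v_1,w_1)$, $\mathbf{u}_2=(v_2,0)$, $\mathbf{u}_3=(v_3,w_3)$, and RSR the CSC path with inputs $\mathbf{u}_1=(v_1,-w_1)$, $\mathbf{u}_2=(v_2,0)$, $\mathbf{u}_3=(v_3,-w_3)$. Then for every start pose $\mathbf{p}_0$ and every pose $\mathbf{p}_f=(x_f,y_f,\theta_f)$, $\mathbf{p}_f$ is reachable from $\mathbf{p}_0$ by the LSL path or by the RSR path (or both). Equivalently, for each $\theta_f$ the open discs $\{(x_f,y_f):(x_f-c)^2+(y_f-d)^2<r_{31}^2\}$ associated with LSL and with RSR are disjoint.
   Context: A pose is $\mathbf{p}=(x,y,\theta)$, heading understood modulo $2\pi$. An input is $\mathbf{u}=(v,\omega)$. The motion primitive $\mathrm{M}_{\mathbf{u},\tau}$ maps $(x,y,\theta)$ to: if $\omega\neq0$, $\big(x-\frac{v}{\omega}(\sin\theta-\sin(\theta+\omega\tau)),\ y+\frac{v}{\omega}(\cos\theta-\cos(\theta+\omega\tau)),\ \theta+\omega\tau\big)$; if $\omega=0$, $(x+v\tau\cos\theta,\ y+v\tau\sin\theta,\ \theta)$. For a path with fixed inputs $\mathbf{u}_1,\mathbf{u}_2,\mathbf{u}_3$, a pose $\mathbf{p}_f$ is reachable from $\mathbf{p}_0=(x_0,y_0,\theta_0)$ if there exist $\tau_1,\tau_2,\tau_3\ge0$, with $|\omega_i\tau_i|<2\pi$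 for turning segments, such that $\mathrm{M}_{\mathbf{u}_3,\tau_3}(\mathrm{M}_{\mathbf{u}_2,\tau_2}(\mathrm{M}_{\mathbf{u}_1,\tau_1}(\mathbf{p}_0)))$ has position $(x_f,y_f)$ and heading congruent to $\theta_f$ modulo $2\pi$. For a CSC path, $r_i=v_i/\omega_i$ ($i=1,3$), $r_{31}=r_3-r_1$, $c=x_0-r_1\sin\theta_0+r_3\sin\theta_f$, $d=y_0+r_1\cos\theta_0-r_3\cos\theta_f$; a CSC path reaches $\mathbf{p}_f$ iff $(x_f-c)^2+(y_f-d)^2\ge r_{31}^2$. *)

(* Defs.v *)
From Stdlib Require Import Reals Lra ZArith.
Open Scope R_scope.

(* A pose (x, y, theta); an input (v, omega). *)
Definition pose := (R * R * R)%type.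
Definition input := (R * R)%type.

Definition motion (u : input) (tau : R) (p : pose) : pose :=
  let '(v, w) := u in
  let '(x, y, th) := p in
  if Req_EM_T w 0 then
    (x + v * tau * cos th, y + v * tau * sin th, th)
  else
    (x - v / w * (sin th - sin (th + w * tau)),
     y + v / w * (cos th - cos (th + w * tau)),
     th + w * tau).

Definition admissible (u : input) (tau : R) : Prop :=
  0 <= tau /\ (snd u <> 0 -> Rabs (snd u * tau) < 2 * PI).

Definition pose_equiv (p q : pose) : Prop :=
  let '(x, y, th) := p in
  let '(x', y', th') := q in
  x = x' /\ y = y' /\ exists k : Z, th = th' + 2 * PI * IZR k.

Definition reachable (u1 u2 u3 : input) (p0 pf : pose) : Prop :=
  exists tau1 tau2 tau3 : R,
    admissible u1 tau1 /\ admissible u2 tau2 /\ admissible u3 tau3 /\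
    pose_equiv (motion u3 tau3 (motion u2 tau2 (motion u1 tau1 p0))) pf.

Definition LSL_reachable (v1 v2 v3 w1 w3 : R) (p0 pf : pose) : Prop :=
  reachable (v1, w1) (v2, 0) (v3, w3) p0 pf.

Definition RSR_reachable (v1 v2 v3 w1 w3 : R) (p0 pf : pose) : Prop :=
  reachable (v1, - w1) (v2, 0) (v3, - w3) p0 pf.

(* Main.v *)
Require Import Defs.
From Stdlib Require Import Reals.
From Stdlib Require Import Lra Lia Psatz ZArith.
Open Scope R_scope.

Lemma sin_perZ : forall x k, sin (x + 2 * PI * IZR k) = sin x.
Proof.
  intros x k. destruct (Z.le_ge_cases 0 k) as [H|H].
  - destruct (Z_of_nat_complete k H) as [n ->]. rewrite <- INR_IZR_INZ.
    replace (x + 2 * PI * INR n) with (x + 2 * INR n * PI) by ring.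
    apply sin_period.
  - assert (H' : (0 <= - k)%Z) by lia.
    destruct (Z_of_nat_complete (- k) H') as [n Hn].
    assert (E : IZR k = - INR n).
    { rewrite INR_IZR_INZ, <- Hn, opp_IZR; ring. }
    rewrite E. rewrite <- (sin_period (x + 2 * PI * - INR n) n). f_equal. ring.
Qed.

Lemma cos_perZ : forall x k, cos (x + 2 * PI * IZR k) = cos x.
Proof.
  intros x k. destruct (Z.le_ge_cases 0 k) as [H|H].
  - destruct (Z_of_nat_complete k H) as [n ->]. rewrite <- INR_IZR_INZ.
    replace (x + 2 * PI * INR n) with (x + 2 * INR n * PI) by ring.
    apply cos_period.
  - assert (H' : (0 <= - k)%Z) by lia.
    destruct (Z_of_nat_complete (- k) H') as [n Hn].
    assert (E : IZR k = - INR n).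
    { rewrite INR_IZR_INZ, <- Hn, opp_IZR; ring. }
    rewrite E. rewrite <- (cos_period (x + 2 * PI * - INR n) n). f_equal. ring.
Qed.

Lemma unit_angle : forall a b, a * a + b * b = 1 -> exists th, cos th = a /\ sin th = b.
Proof.
  intros a b H.
  assert (Ha : -1 <= a <= 1) by nra.
  assert (Hs : sin (acos a) = Rabs b).
  { rewrite sin_acos by exact Ha. rewrite <- sqrt_Rsqr_abs. f_equal.
    unfold Rsqr. lra. }
  destruct (Rle_or_lt 0 b) as [Hb|Hb].
  - exists (acos a). split. apply cos_acos; exact Ha.
    rewrite Hs. apply Rabs_right; lra.
  - exists (- acos a). rewrite cos_neg, sin_neg. split. apply cos_acos; exact Ha.
    rewrite Hs. rewrite Rabs_left by lra. ring.
Qed.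

Lemma rot_exists : forall X Y L r, L * L + r * r = X * X + Y * Y ->
  exists th, X = L * cos th - r * sin th /\ Y = L * sin th + r * cos th.
Proof.
  intros X Y L r H.
  destruct (Req_dec (X * X + Y * Y) 0) as [H0|H0].
  - assert (X = 0) by nra. assert (Y = 0) by nra.
    assert (L = 0) by nra. assert (r = 0) by nra. subst.
    exists 0. split; ring.
  - set (rho := X * X + Y * Y) in *.
    destruct (unit_angle ((X * L + Y * r) / rho) ((Y * L - X * r) / rho)) as [th [Hc Hs]].
    { replace (((X * L + Y * r) / rho) * ((X * L + Y * r) / rho) +
        ((Y * L - X * r) / rho) * ((Y * L - X * r) / rho))
        with ((X * X + Y * Y) * (L * L + r * r) / (rho * rho)) by (field; auto).
      rewrite H. unfold rho. field. auto. }
    exists th. rewrite Hc, Hs. split.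
    + replace (L * ((X * L + Y * r) / rho) - r * ((Y * L - X * r) / rho))
        with (X * (L * L + r * r) / rho) by (field; auto).
      rewrite H. fold rho. field. auto.
    + replace (L * ((Y * L - X * r) / rho) + r * ((X * L + Y * r) / rho))
        with (Y * (L * L + r * r) / rho) by (field; auto).
      rewrite H. fold rho. field. auto.
Qed.

Lemma rep02pi : forall beta, exists al k, 0 <= al < 2 * PI /\ al = beta + 2 * PI * IZR k.
Proof.
  intros beta. pose proof PI_RGT_0 as HPI.
  destruct (archimed (beta / (2 * PI))) as [H1 H2].
  set (n := (up (beta / (2 * PI)) - 1)%Z).
  assert (En : IZR n = IZR (up (beta / (2 * PI))) - 1).
  { unfold n. rewrite minus_IZR. reflexivity. }
  exists (beta - 2 * PI * IZR n), (- n)%Z. rewrite opp_IZR. split; [|ring].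
  rewrite En.
  assert (Hq : beta = 2 * PI * (beta / (2 * PI))) by (field; lra).
  split; nra.
Qed.

Lemma angle_rep : forall a beta, a <> 0 ->
  exists tau k, 0 <= tau /\ Rabs (a * tau) < 2 * PI /\ a * tau = beta + 2 * PI * IZR k.
Proof.
  intros a beta Ha.
  destruct (Rlt_or_le 0 a) as [Hp|Hn].
  - destruct (rep02pi beta) as [al [k [Hal E]]].
    exists (al / a), k.
    replace (a * (al / a)) with al by (field; lra).
    split. apply Rmult_le_pos; [lra|]. left; apply Rinv_0_lt_compat; lra.
    split; [rewrite Rabs_right; lra | exact E].
  - assert (Hn' : a < 0) by lra.
    destruct (rep02pi (- beta)) as [al [k [Hal E]]].
    exists (al / - a), (- k)%Z.
    replace (a * (al / - a)) with (- al) by (field; lra).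
    split. apply Rmult_le_pos; [lra|]. left; apply Rinv_0_lt_compat; lra.
    split. rewrite Rabs_Ropp, Rabs_right; lra.
    rewrite opp_IZR. lra.
Qed.

Lemma csc_reach : forall v1 v2 v3 a b x0 y0 t0 xf yf tf,
  0 < v2 -> a <> 0 -> b <> 0 ->
  (xf - (x0 - v1 / a * sin t0 + v3 / b * sin tf)) ^ 2
  + (yf - (y0 + v1 / a * cos t0 - v3 / b * cos tf)) ^ 2 >= (v3 / b - v1 / a) ^ 2 ->
  reachable (v1, a) (v2, 0) (v3, b) (x0, y0, t0) (xf, yf, tf).
Proof.
  intros v1 v2 v3 a b x0 y0 t0 xf yf tf Hv2 Ha Hb Hc.
  set (r1 := v1 / a) in *. set (r3 := v3 / b) in *.
  set (X := xf - (x0 - r1 * sin t0 + r3 * sin tf)) in *.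
  set (Y := yf - (y0 + r1 * cos t0 - r3 * cos tf)) in *.
  set (r := r3 - r1) in *.
  set (L := sqrt (X * X + Y * Y - r * r)).
  assert (HL0 : 0 <= L) by apply sqrt_pos.
  assert (HL : L * L = X * X + Y * Y - r * r) by (apply sqrt_sqrt; nra).
  destruct (rot_exists X Y L r) as [th [HX HY]]; [lra|].
  destruct (angle_rep a (th - t0) Ha) as [tau1 [k1 [H1a [H1b H1c]]]].
  destruct (angle_rep b (tf - (t0 + a * tau1)) Hb) as [tau3 [k3 [H3a [H3b H3c]]]].
  exists tau1, (L / v2), tau3.
  split; [split; [exact H1a| intros _; exact H1b]|].
  split; [split; [apply Rmult_le_pos; [lra| left; apply Rinv_0_lt_compat; lra] | simpl; intros Hz; exfalso; apply Hz; reflexivity]|].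
  split; [split; [exact H3a| intros _; exact H3b]|].
  unfold motion.
  destruct (Req_EM_T a 0) as [|_]; [contradiction|].
  destruct (Req_EM_T 0 0) as [_|]; [|contradiction].
  destruct (Req_EM_T b 0) as [|_]; [contradiction|].
  simpl.
  replace (t0 + a * tau1 + b * tau3) with (tf + 2 * PI * IZR k3) by lra.
  replace (t0 + a * tau1) with (th + 2 * PI * IZR k1) by lra.
  rewrite !sin_perZ, !cos_perZ.
  replace (v2 * (L / v2)) with L by (field; lra).
  fold r1 r3.
  split; [|split].
  - unfold X, r in HX. lra.
  - unfold Y, r in HY. lra.
  - exists k3. reflexivity.
Qed.

Theorem theorem3 :
  forall (v1 v2 v3 w1 w3 : R),
    0 < v1 -> 0 < v2 -> 0 < v3 -> 0 < w1 -> 0 < w3 ->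
    forall p0 pf : pose,
      LSL_reachable v1 v2 v3 w1 w3 p0 pf \/ RSR_reachable v1 v2 v3 w1 w3 p0 pf.
Proof.
  intros v1 v2 v3 w1 w3 H1 H2 H3 H4 H5 [[x0 y0] t0] [[xf yf] tf].
  unfold LSL_reachable, RSR_reachable.
  assert (E1 : v1 / - w1 = - (v1 / w1)) by (field; lra).
  assert (E3 : v3 / - w3 = - (v3 / w3)) by (field; lra).
  assert (P1 : 0 < v1 / w1) by (apply Rdiv_lt_0_compat; lra).
  assert (P3 : 0 < v3 / w3) by (apply Rdiv_lt_0_compat; lra).
  destruct (Rge_or_gt ((xf - (x0 - v1 / w1 * sin t0 + v3 / w3 * sin tf)) ^ 2
     + (yf - (y0 + v1 / w1 * cos t0 - v3 / w3 * cos tf)) ^ 2) ((v3 / w3 - v1 / w1) ^ 2)) as [HL|HL].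
  - left. apply csc_reach; lra.
  - right. apply csc_reach; try lra.
    rewrite E1, E3.
    set (r1 := v1 / w1) in *. set (r3 := v3 / w3) in *.
    pose proof (sin2_cos2 t0) as S0. pose proof (sin2_cos2 tf) as Sf.
    unfold Rsqr in S0, Sf.
    apply Rnot_lt_ge. intros HR.
    set (X := xf - (x0 - r1 * sin t0 + r3 * sin tf)) in *.
    set (Y := yf - (y0 + r1 * cos t0 - r3 * cos tf)) in *.
    set (X' := xf - (x0 - - r1 * sin t0 + - r3 * sin tf)) in *.
    set (Y' := yf - (y0 + - r1 * cos t0 - - r3 * cos tf)) in *.
    assert (D : (X' - X) ^ 2 + (Y' - Y) ^ 2 >= 4 * (r3 - r1) ^ 2).
    {
      assert (Hcs : cos t0 * cos tf + sin t0 * sin tf <= 1).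
      { pose proof (pow2_ge_0 (cos t0 - cos tf)); pose proof (pow2_ge_0 (sin t0 - sin tf)); nra. }
      replace ((X' - X) ^ 2 + (Y' - Y) ^ 2) with
        (4 * (r1 * r1 * (sin t0 * sin t0 + cos t0 * cos t0) + r3 * r3 * (sin tf * sin tf + cos tf * cos tf)
          - 2 * (r1 * r3) * (cos t0 * cos tf + sin t0 * sin tf))) by (unfold X, Y, X', Y'; ring).
      rewrite S0, Sf.
      assert (0 < r1 * r3) by nra. nra. }
    pose proof (pow2_ge_0 (X + X')); pose proof (pow2_ge_0 (Y + Y')).
    nra.
Qed.
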